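(* For every fixed $(X,Y,Z)$, the partial gradient $X_0\mapsto\nabla_{X_0}\mathcal L_\eta(X,X_0;Y,Z)$ is $\frac3\eta$-Lipschitz continuous with respect to the Frobenius norm. Further, if $\{(X^k,X_0^k;Y^k,Z^k)\}_{k\ge0}$ is generated by ADAPD (defined in the context), then for all $k\ge0$, $$\mathcal L_\eta(X^{k+1},X_0^{k+1};Y^k,Z^k)-\mathcal L_\eta(X^{k+1},X_0^k;Y^k,Z^k)\le-\frac1{2\eta}\|X_0^{k+1}-X_0^k\|_F^2.$$
   Context: Notation: $\langle A,B\rangle=\sum_{i,j}a_{ij}b_{ij}$, $\|\cdot\|_F$ Frobenius norm, $e\in\mathbb R^N$ all-ones vector. Mixing matrix $W\in\mathbb R^{N\times N}$ of an undirected graph $\mathcal G=(\{1,\dots,N\},\mathcal E)$ with (i) $w_{ij}>0$ if $(i,j)\in\mathcal E$, $w_{ij}=0$ otherwise; (ii) $W=W^\top$; (iii) $\mathrm{null}(I-W)=\mathrm{span}\{e\}$; (iv) $-1<\lambda_N(W)\le\dots\le\lambda_2(W)<\lambda_1(W)=1$. $\sqrt{I-W}$ is the PSD square root of $I-W$. $f_i:\mathbb R^p\to\mathbb R$ differentiable; $F(X)=\frac1N\sum_if_i(x_i)$ for $X$ with rows $x_i^\top$, gradient $\nabla F(X)$ with rows $\frac1N\nabla f_i(x_i)^\top$. Augmented Lagrangian, $\eta>0$: $\mathcal L_\eta(X,X_0;Y,Z)=F(X)+\langle Y,X-X_0\rangle+\frac1{2\eta}\|X-X_0\|_F^2+\langle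 Z,\sqrt{I-W}X_0\rangle+\frac1{2\eta}\|\sqrt{I-W}X_0\|_F^2$. ADAPD: fix $\eta>0$ and non-increasing nonnegative $(\epsilon_k)_{k\ge1}$; arbitrary $X^0,X_0^0,Y^0$, $Z^0\in\mathrm{range}(\sqrt{I-W})$. For $k\ge0$: $X^{k+1}$ is any matrix such that each row $r_i^{k+1}$ of $R^{k+1}=\nabla F(X^{k+1})+Y^k+\frac1\eta(X^{k+1}-X_0^k)$ satisfies $\|r_i^{k+1}\|_2^2\le\epsilon_{k+1}/N$; $X_0^{k+1}=\frac12(WX_0^k+X^{k+1}+\eta(Y^k-\sqrt{I-W}Z^k))$, $Y^{k+1}=Y^k+\frac1\eta(X^{k+1}-X_0^{k+1})$, $Z^{k+1}=Z^k+\frac1\eta\sqrt{I-W}X_0^{k+1}$. *)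

(* Defs.v *)
From HB Require Import structures.
From mathcomp Require Import all_boot all_order all_algebra.
From mathcomp Require Import all_classical all_reals all_analysis.
Set Implicit Arguments. Unset Strict Implicit. Unset Printing Implicit Defensive.
Import Order.TTheory GRing.Theory Num.Theory.
Import numFieldNormedType.Exports.
Local Open Scope ring_scope.

Section Defs.
Variable R : realType.

Definition frob_inner (m n : nat) (A B : 'M[R]_(m, n)) : R :=
  \sum_(i < m) \sum_(j < n) A i j * B i j.

Definition frob (m n : nat) (A : 'M[R]_(m, n)) : R := Num.sqrt (frob_inner A A).

(* For m = 1 this is the usual gradient of a function on R^p (row vector). *)
Definition mgrad (m n : nat) (g : 'M[R]_(m, n) -> R) (A : 'M[R]_(m, n)) : 'M[R]_(m, n) :=
  \matrix_(i < m, j < n) 'D_(delta_mx i j) g A.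

Definition is_psd_sqrt (N : nat) (S A : 'M[R]_N) : Prop :=
  S^T = S /\ (forall v : 'cV[R]_N, 0 <= (v^T *m S *m v) 0 0) /\ S *m S = A.

Definition mixing_matrix (N : nat) (E : rel 'I_N) (W : 'M[R]_N) : Prop :=
  (forall i j, E i j = E j i) /\
  (forall i j, (E i j -> 0 < W i j) /\ (~~ E i j -> W i j = 0)) /\
  W^T = W /\
  (forall v : 'cV[R]_N, (1%:M - W) *m v = 0 <-> exists c : R, v = c *: const_mx 1) /\
  (forall a : R, eigenvalue W a -> -1 < a <= 1) /\ eigenvalue W 1.

Definition bigF (N p : nat) (f : 'I_N -> 'rV[R]_p -> R) (X : 'M[R]_(N, p)) : R :=
  N%:R^-1 * \sum_(i < N) f i (row i X).

Definition gradF (N p : nat) (f : 'I_N -> 'rV[R]_p -> R) (X : 'M[R]_(N, p)) : 'M[R]_(N, p) :=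
  \matrix_(i < N, j < p) (N%:R^-1 * mgrad (f i) (row i X) 0 j).

(* Augmented Lagrangian; S stands for sqrt(I - W) *)
Definition augL (N p : nat) (f : 'I_N -> 'rV[R]_p -> R) (S : 'M[R]_N) (eta : R)
  (X X0 Y Z : 'M[R]_(N, p)) : R :=
  bigF f X + frob_inner Y (X - X0) + (2 * eta)^-1 * frob (X - X0) ^+ 2
  + frob_inner Z (S *m X0) + (2 * eta)^-1 * frob (S *m X0) ^+ 2.

Definition ADAPD (N p : nat) (f : 'I_N -> 'rV[R]_p -> R) (W S : 'M[R]_N) (eta : R)
  (eps : nat -> R) (X X0 Y Z : nat -> 'M[R]_(N, p)) : Prop :=
  (exists V : 'M[R]_(N, p), Z 0%N = S *m V) /\
  forall k : nat,
    (forall i : 'I_N,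
       frob (row i (gradF f (X k.+1) + Y k + eta^-1 *: (X k.+1 - X0 k))) ^+ 2
         <= eps k.+1 / N%:R) /\
    X0 k.+1 = 2^-1 *: (W *m X0 k + X k.+1 + eta *: (Y k - S *m Z k)) /\
    Y k.+1 = Y k + eta^-1 *: (X k.+1 - X0 k.+1) /\
    Z k.+1 = Z k + eta^-1 *: (S *m X0 k.+1).

End Defs.

(* Main.v *)
Require Import Defs.
From HB Require Import structures.
From mathcomp Require Import all_boot all_order all_algebra.
From mathcomp Require Import all_classical all_reals all_analysis.
Import Order.TTheory GRing.Theory Num.Theory.
Import numFieldNormedType.Exports.
From mathcomp Require Import ring lra.
Local Open Scope ring_scope.


Section Helpers.
Set Implicit Arguments. Unset Strict Implicit.
Section DQ.
Local Open Scope classical_set_scope.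

Lemma derive_quad (R : realType) (V : normedModType R) (g : V -> R) (A v : V) (a b : R) :
 (forall h : R, g (h *: v + A) = g A + h * a + h^+2 * b) -> 'D_v g A = a.
Proof.
move=> H; rewrite /derive; apply: cvg_lim => //.
have e : {near 0^', (fun h : R => a + h * b) =1 (fun h => h^-1 *: ((g \o shift A) (h *: v) - g A))}.
  near=> h.
  have h0 : h != 0 by near: h; exact: nbhs_dnbhs_neq.
  rewrite /= H /GRing.scale /=. field.
  done.
apply: cvg_trans (near_eq_cvg e) _.
suff: (fun h : R => a + h * b) @ 0^' --> a + 0 * b by rewrite mul0r addr0.
apply: cvgD; first exact: cvg_cst.
apply: cvgMl.
exact: cvg_within.
Unshelve. all: by end_near.
Qed.

End DQ.
Section FI.
Variable R : realType.
Variables m n : nat.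
Implicit Types A B C : 'M[R]_(m, n).

Lemma fiC A B : frob_inner A B = frob_inner B A.
Proof. by rewrite /frob_inner; apply: eq_bigr => i _; apply: eq_bigr => j _; rewrite mulrC. Qed.

Lemma fiDl A B C : frob_inner (A + B) C = frob_inner A C + frob_inner B C.
Proof.
rewrite /frob_inner -big_split; apply: eq_bigr => i _.
rewrite -big_split; apply: eq_bigr => j _; by rewrite mxE mulrDl.
Qed.

Lemma fiZl a A B : frob_inner (a *: A) B = a * frob_inner A B.
Proof.
rewrite /frob_inner mulr_sumr; apply: eq_bigr => i _.
rewrite mulr_sumr; apply: eq_bigr => j _; by rewrite mxE mulrA.
Qed.

Lemma fiNl A B : frob_inner (- A) B = - frob_inner A B.
Proof. by rewrite -scaleN1r fiZl mulN1r. Qed.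

Lemma fiDr A B C : frob_inner C (A + B) = frob_inner C A + frob_inner C B.
Proof. by rewrite fiC fiDl !(fiC C). Qed.
Lemma fiZr a A B : frob_inner B (a *: A) = a * frob_inner B A.
Proof. by rewrite fiC fiZl fiC. Qed.
Lemma fiNr A B : frob_inner B (- A) = - frob_inner B A.
Proof. by rewrite fiC fiNl fiC. Qed.

Lemma fi_ge0 A : 0 <= frob_inner A A.
Proof. by apply: sumr_ge0 => i _; apply: sumr_ge0 => j _; exact: sqr_ge0. Qed.

Lemma frob_sq A : frob A ^+ 2 = frob_inner A A.
Proof. by rewrite /frob sqr_sqrtr // fi_ge0. Qed.

Lemma fi_quad A B : frob_inner (A + B) (A + B) = frob_inner A A + 2 * frob_inner A B + frob_inner B B.
Proof. rewrite !fiDl !fiDr (fiC B A); ring. Qed.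

Lemma fi_delta (G : 'M[R]_(m,n)) i j : frob_inner G (delta_mx i j) = G i j.
Proof.
rewrite /frob_inner (bigD1 i) //= [X in _ + X = _]big1 => [|k nk]; last first.
  by apply: big1 => l _; rewrite mxE (negbTE nk) /= mulr0.
rewrite addr0 (bigD1 j) //= [X in _ + X = _]big1 => [|l nl]; last by rewrite mxE (negbTE nl) andbF mulr0.
by rewrite mxE !eqxx mulr1 addr0.
Qed.

Lemma frobZ a A : 0 <= a -> frob (a *: A) = a * frob A.
Proof.
move=> a0; rewrite /frob fiZl fiZr mulrA sqrtrM ?mulr_ge0 //.
by rewrite -expr2 sqrtr_sqr ger0_norm.
Qed.

End FI.

Lemma fi_mull (R : realType) m k n (M : 'M[R]_(m,k)) (A : 'M[R]_(k,n)) B :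
  frob_inner (M *m A) B = frob_inner A (M^T *m B).
Proof.
rewrite /frob_inner.
transitivity (\sum_(i < m) \sum_(j < n) \sum_(l < k) M i l * A l j * B i j).
  apply: eq_bigr => i _; apply: eq_bigr => j _; rewrite mxE mulr_suml.
  by apply: eq_bigr => l _.
rewrite exchange_big /=.
transitivity (\sum_(j < n) \sum_(l < k) \sum_(i < m) M i l * A l j * B i j).
  by apply: eq_bigr => j _; rewrite exchange_big.
rewrite exchange_big /=; apply: eq_bigr => l _; apply: eq_bigr => j _.
rewrite mxE mulr_sumr; apply: eq_bigr => i _; rewrite !mxE; ring.
Qed.

Lemma jensen (R : realType) N (w x : 'I_N -> R) :
  (forall j, 0 <= w j) -> \sum_j w j = 1 ->
  (\sum_j w j * x j) ^+ 2 <= \sum_j w j * x j ^+ 2.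
Proof.
move=> w0 w1; set m := \sum_j w j * x j.
have : 0 <= \sum_j w j * (x j - m) ^+ 2.
  by apply: sumr_ge0 => j _; rewrite mulr_ge0 // sqr_ge0.
have -> : \sum_j w j * (x j - m) ^+ 2 =
   \sum_j w j * x j ^+ 2 - 2 * m * \sum_j w j * x j + m ^+ 2 * \sum_j w j.
  rewrite [2 * m * _]mulr_sumr [m ^+ 2 * _]mulr_sumr -sumrB -big_split /=; apply: eq_bigr => j _; ring.
rewrite w1 -/m; lra.
Qed.

Section Mix.
Variables (R : realType) (N p : nat) (W : 'M[R]_N).
Hypotheses (W0 : forall i j, 0 <= W i j) (Wr : forall i, \sum_j W i j = 1)
  (Wc : forall j, \sum_i W i j = 1).

Lemma fiW (D : 'M[R]_(N, p)) : frob_inner (W *m D) (W *m D) <= frob_inner D D.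
Proof.
rewrite /frob_inner.
apply: le_trans (_ : \sum_(i < N) \sum_(c < p) \sum_(j < N) W i j * D j c ^+ 2 <= _).
  apply: ler_sum => i _; apply: ler_sum => c _; rewrite -expr2 mxE.
  exact: jensen.
rewrite (eq_bigr (fun i => \sum_(j < N) \sum_(c < p) W i j * D j c ^+ 2)); last first.
  by move=> i _; rewrite exchange_big.
rewrite exchange_big /= le_eqVlt; apply/orP; left; apply/eqP.
apply: eq_bigr => j _; rewrite exchange_big /=; apply: eq_bigr => c _.
by rewrite -mulr_suml Wc mul1r expr2.
Qed.

Lemma fiWneg (D : 'M[R]_(N, p)) : - frob_inner D (W *m D) <= frob_inner D D.
Proof.
have h1 := fi_ge0 (D + W *m D); rewrite fi_quad in h1.
have h2 := fiW D; lra.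
Qed.
End Mix.

Lemma fi_mulr (R : realType) m k n (M : 'M[R]_(m,k)) (A : 'M[R]_(m,n)) B :
  frob_inner A (M *m B) = frob_inner (M^T *m A) B.
Proof. by rewrite fiC fi_mull fiC. Qed.

Lemma grad_augL (R : realType) (N p : nat) (f : 'I_N -> 'rV[R]_p -> R) (S : 'M[R]_N) (eta : R)
  (X U Y Z : 'M[R]_(N, p)) :
  mgrad (fun U => augL f S eta X U Y Z) U =
   - Y - eta^-1 *: (X - U) + S^T *m Z + eta^-1 *: (S^T *m (S *m U)).
Proof.
apply/matrixP => i j. rewrite [LHS]mxE.
pose G := (- Y - eta^-1 *: (X - U) + S^T *m Z + eta^-1 *: (S^T *m (S *m U)) : 'M[R]_(N, p)).

rewrite -(fi_delta G i j).
set v := delta_mx i j.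
have eG : frob_inner G v = - frob_inner Y v - eta^-1 * frob_inner (X - U) v
   + frob_inner Z (S *m v) + eta^-1 * frob_inner (S *m U) (S *m v).
  by rewrite /G !(fiDl, fiNl, fiZl, fi_mull, trmxK).
eapply (@derive_quad R _ _ U v (frob_inner G v) ((2 * eta)^-1 * (frob_inner v v + frob_inner (S *m v) (S *m v)))).
move=> h; rewrite eG /augL.
have -> : X - (h *: v + U) = (X - U) + (-h) *: v.
  by rewrite scaleNr opprD addrA addrAC.
have -> : S *m (h *: v + U) = S *m U + h *: (S *m v).
  by rewrite mulmxDr scalemxAr addrC.
set XU := X - U; set SU := S *m U; set Sv := S *m v.
rewrite !frob_sq !fi_quad !(fiDr, fiZr, fiZl).
by rewrite !invfM; set e := eta^-1; field.
Qed.

End Helpers.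

Unset Implicit Arguments.

Theorem lemma8 (R : realType) (N p : nat) (E : rel 'I_N) (W S : 'M[R]_N)
  (f : 'I_N -> 'rV[R]_p -> R) (eta : R) :
  mixing_matrix E W ->
  is_psd_sqrt S (1%:M - W) ->
  (forall i x, differentiable (f i) x) ->
  0 < eta ->
  (forall X Y Z X0 X0' : 'M[R]_(N, p),
     frob (mgrad (fun U => augL f S eta X U Y Z) X0
           - mgrad (fun U => augL f S eta X U Y Z) X0')
       <= 3 / eta * frob (X0 - X0')) /\
  (forall (eps : nat -> R) (X X0 Y Z : nat -> 'M[R]_(N, p)),
     (forall k, 0 <= eps k.+1) ->
     (forall k, eps k.+2 <= eps k.+1) ->
     ADAPD f W S eta eps X X0 Y Z ->
     forall k : nat,
       augL f S eta (X k.+1) (X0 k.+1) (Y k) (Z k)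
         - augL f S eta (X k.+1) (X0 k) (Y k) (Z k)
       <= - ((2 * eta)^-1 * frob (X0 k.+1 - X0 k) ^+ 2)).
Proof.
move=> [_ [hEW [hWT [hnull _]]]] [hST [_ hSS]] _ eta0.
have W0 : forall i j, 0 <= W i j.
  move=> i j; have [h1 h2] := hEW i j.
  by case: (boolP (E i j)) => e; [exact/ltW/h1 | rewrite h2].
have Wr : forall i, \sum_j W i j = 1.
  move=> i; have := (hnull (const_mx 1)).2 (ex_intro _ 1 (esym (scale1r _))).
  rewrite mulmxBl mul1mx => /eqP; rewrite subr_eq0 => /eqP /matrixP /(_ i 0).
  rewrite !mxE => ->; by apply: eq_bigr => j _; rewrite mxE mulr1.
have Wc : forall j, \sum_i W i j = 1.
  move=> j; rewrite -(Wr j); apply: eq_bigr => i _.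
  by rewrite -[in LHS]hWT mxE.
have hS2 : forall A : 'M[R]_(N, p), S^T *m (S *m A) = A - W *m A.
  by move=> A; rewrite hST mulmxA hSS mulmxBl mul1mx.
have e0 : 0 <= eta^-1 by rewrite invr_ge0 ltW.
have etan0 : eta != 0 by rewrite gt_eqF.
split.
  move=> X Y Z U U'; rewrite !grad_augL !hS2.
  set D := U - U'.
  have -> : - Y - eta^-1 *: (X - U) + S^T *m Z + eta^-1 *: (U - W *m U) -
    (- Y - eta^-1 *: (X - U') + S^T *m Z + eta^-1 *: (U' - W *m U')) =
    eta^-1 *: (2 *: D - W *m D).
    rewrite /D mulmxBr; apply/matrixP => i j; rewrite !mxE; ring.
  rewrite frobZ // (mulrC 3) -mulrA; apply: ler_wpM2l => //.
  have hq : frob (2 *: D - W *m D) ^+ 2 <= (3 * frob D) ^+ 2.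
    rewrite exprMn !frob_sq fi_quad !(fiZl, fiZr, fiNl, fiNr).
    have h1 := fiW W0 Wr Wc D; have h2 := fiWneg W0 Wr Wc D.
    lra.
  have f1 : 0 <= frob (2 *: D - W *m D) by rewrite /frob sqrtr_ge0.
  have f2 : 0 <= frob D by rewrite /frob sqrtr_ge0.
  nra.
move=> eps X X0 Y Z _ _ [_ hk] k.
have [_ [hX0 _]] := hk k.
move: hX0; rewrite frob_sq.
move: (X0 k.+1) (X0 k) (X k.+1) (Y k) (Z k) => U' U Xk Yk Zk hU'.
have [D eD] : exists D, U' = U + D by exists (U' - U); rewrite addrC subrK.
rewrite eD in hU' *; have -> : U + D - U = D by rewrite addrC addKr.
clear eD U'.
rewrite /augL.
have -> : Xk - (U + D) = (Xk - U) - D by rewrite opprD addrA.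
rewrite mulmxDr !frob_sq !fi_quad.
set XU := Xk - U.
rewrite !(fiDr, fiNr).
rewrite (fi_mulr S Zk D) (fi_mulr S (S *m U) D) (fi_mulr S (S *m D) D) !hS2.
set c := (2 * eta)^-1.
have hM : - Yk - (2 * c) *: XU + S^T *m Zk + (2 * c) *: (U - W *m U) + c *: D
     + c *: (D - W *m D) = - (2 * c) *: D - c *: (W *m D).
  apply/matrixP => i j; move/matrixP: hU' => /(_ i j).
  rewrite /c /XU hST !mxE => hij.
  move: hij => /(congr1 (fun x => x - U i j)); rewrite /= [U i j + D i j - U i j]addrAC subrr add0r => ->.
  by field.
have := congr1 (fun A => frob_inner A D) hM; rewrite /= !(fiDl, fiNl, fiZl) => h.
have hWn := fiWneg W0 Wr Wc D.
have c0 : 0 <= c by rewrite /c invr_ge0 mulr_ge0 // ltW.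
have hc : 0 <= c * (frob_inner D D + frob_inner D (W *m D)) by rewrite mulr_ge0 //; lra.
rewrite (fiC (W *m D) D) in h.
rewrite ?(fiDl, fiNl, fiZl) ?(fiC (W *m D) D).
lra.
Qed.
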